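(* Let $R$ be a unital $*$-ring, $p\in R$ a projection and $\phi:R\to pRp$ a unital $*$-ring isomorphism, and let $A=R[t_+,t_-,\phi]$ with its $\mathbb Z$-grading and involution. Then: (1) $R$ is proper if and only if $A$ is graded proper; (2) $R$ is positive definite if and only if $A$ is positive definite.
   Context: With $p_0=1$, $p_n=\phi^n(p_0)$, the corner skew Laurent polynomial ring $R[t_+,t_-,\phi]$ is the unital ring of formal expressions $t_-^m r_{-m}+\dots+t_-r_{-1}+r_0+r_1t_++\dots+r_nt_+^n$ with $r_{-i}\in p_iR$, $r_j\in Rp_j$, componentwise addition and multiplication determined by distributivity and $t_-t_+=1$, $t_+t_-=p$, $rt_-=t_-\phi(r)$, $t_+r=\phi(r)t_+$. It is $\mathbb Z$-graded with $A_0=R$, $A_n=Rp_nt_+^n$, $A_{-n}=t_-^np_nR$ ($n\ge1$), and has the involution extending that of $R$ additively by $(t_-^ir)^*=r^*t_+^i$, $(rt_+^i)^*=t_-^ir^*$. A projection is $p=p^2=p^*$. A $*$-ring is proper if $xx^*=0\Rightarrow x=0$, graded proper if this holds for homogeneous $x$, and positive definite if for all $n$ and $x_1,\dots,x_n$, $\sum_i x_ix_i^*=0$ implies all $x_i=0$. *)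

(* Defs.v *)
From HB Require Import structures.
From mathcomp Require Import all_boot all_order all_algebra.
From Stdlib Require Import ClassicalEpsilon.
Set Implicit Arguments. Unset Strict Implicit. Unset Printing Implicit Defensive.
Import Order.TTheory GRing.Theory Num.Theory.
Local Open Scope ring_scope.

Section CornerSkew.
Variable R : pzRingType.

Definition is_involution (s : R -> R) : Prop :=
  [/\ forall x y, s (x + y) = s x + s y,
      forall x y, s (x * y) = s y * s x
    & forall x, s (s x) = x].

Definition is_projection (s : R -> R) (p : R) : Prop := p * p = p /\ s p = p.

Definition is_corner_star_iso (s : R -> R) (p : R) (phi : R -> R) : Prop :=
  (forall x y, phi (x + y) = phi x + phi y) /\
  (forall x y, phi (x * y) = phi x * phi y) /\
  phi 1 = p /\
  (forall x, phi (s x) = s (phi x)) /\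
  injective phi /\
  (forall x, p * phi x * p = phi x) /\
  (forall y, p * y * p = y -> exists x, phi x = y).

Definition star_proper (s : R -> R) : Prop := forall x : R, x * s x = 0 -> x = 0.

Definition star_positive_definite (s : R -> R) : Prop :=
  forall (n : nat) (x : 'I_n -> R),
    \sum_(i < n) x i * s (x i) = 0 -> forall i, x i = 0.

Variables (s : R -> R) (p : R) (phi : R -> R).

Definition phin (n : nat) : R -> R := iter n phi.
Definition pn (n : nat) : R := phin n 1.

(* inverse of phi : R -> pRp (chosen by classical choice; only applied to
   elements of the image) *)
Definition phiinv (y : R) : R := epsilon (inhabits 0) (fun x => phi x = y).
Definition phiinvn (n : nat) : R -> R := iter n phiinv.

(* An element of A is represented by its family of coefficients:
   cf k is r_k (coefficient of r_k t_+^k) for k >= 0, and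
   cf (-k) is r_{-k} (coefficient of t_-^k r_{-k}) for k >= 1;
   all coefficients vanish outside [-bnd, bnd]. *)
Record cslp := CSLP { cbnd : nat; ccf : int -> R }.

Definition cwf (x : cslp) : Prop :=
  [/\ forall k : int, (cbnd x < absz k)%N -> ccf x k = 0,
      forall n : nat, pn n * ccf x (- n%:Z) = ccf x (- n%:Z)
    & forall n : nat, ccf x n%:Z * pn n = ccf x n%:Z].

(* product of a homogeneous element of degree i with coefficient a and a
   homogeneous element of degree j with coefficient b: the coefficient
   (in degree i + j) of the product, computed from t_- t_+ = 1, t_+ t_- = p,
   r t_- = t_- phi(r), t_+ r = phi(r) t_+:
   (a t+^n)(b t+^m)   = a phi^n(b) t+^(n+m)
   (t-^n a)(t-^m b)   = t-^(n+m) phi^m(a) b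
   (a t+^n)(t-^m b)   = a phi^(n-m)(b) t+^(n-m)      if m <= n
                      = t-^(m-n) phi^(m-n)(a) b      if n < m
   (t-^n a)(b t+^m)   = t-^(n-k) phi^-k(p_k a b p_k) t+^(m-k),  k = min n m *)
Definition hmul (i j : int) (a b : R) : R :=
  let n := absz i in let m := absz j in
  if 0 <= i then
    if 0 <= j then a * phin n b
    else (if (m <= n)%N then a * phin (n - m) b else phin (m - n) a * b)
  else
    if 0 <= j then
      (let k := minn n m in phiinvn k (pn k * (a * b) * pn k))
    else phin m a * b.

Definition cmul (x y : cslp) : cslp :=
  CSLP (cbnd x + cbnd y) (fun k =>
    \sum_(i < (cbnd x).*2.+1) \sum_(j < (cbnd y).*2.+1)
      let di := (i : nat)%:Z - (cbnd x)%:Z in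
      let dj := (j : nat)%:Z - (cbnd y)%:Z in
      if di + dj == k then hmul di dj (ccf x di) (ccf y dj) else 0).

Definition cadd (x y : cslp) : cslp :=
  CSLP (maxn (cbnd x) (cbnd y)) (fun k => ccf x k + ccf y k).

Definition czero : cslp := CSLP 0 (fun _ => 0).

(* involution: (t-^i r)^* = r^* t+^i, (r t+^i)^* = t-^i r^* *)
Definition cstar (x : cslp) : cslp := CSLP (cbnd x) (fun k => s (ccf x (- k))).

Definition ceq (x y : cslp) : Prop := forall k, ccf x k = ccf y k.

Definition homogeneous (x : cslp) : Prop :=
  exists d : int, forall k, k != d -> ccf x k = 0.

Definition A_graded_proper : Prop :=
  forall x : cslp, cwf x -> homogeneous x ->
    ceq (cmul x (cstar x)) czero -> ceq x czero.

Definition A_positive_definite : Prop :=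
  forall (n : nat) (x : 'I_n -> cslp), (forall i, cwf (x i)) ->
    ceq (\big[cadd/czero]_(i < n) cmul (x i) (cstar (x i))) czero ->
    forall i, ceq (x i) czero.

End CornerSkew.

(* Main.v *)
Require Import Defs.
From mathcomp Require Import all_boot all_order all_algebra.
From mathcomp Require Import zify ring.
From Stdlib Require Import ClassicalEpsilon.
Set Implicit Arguments. Unset Strict Implicit. Unset Printing Implicit Defensive.
Import Order.TTheory GRing.Theory Num.Theory.
Local Open Scope ring_scope.

Section Sums.
Variable V : zmodType.
Definition Sb (b : nat) (F : int -> V) : V :=
  \sum_(i < b.*2.+1) F ((i : nat)%:Z - b%:Z).

Lemma Sb0 F : Sb 0 F = F 0.
Proof. by rewrite /Sb big_ord1 subrr. Qed.

Lemma sum_ord2 n (G : nat -> V) :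
  \sum_(i < n.+2) G (i : nat) = G 0%N + \sum_(i < n) G (i : nat).+1 + G n.+1.
Proof. rewrite big_ord_recl big_ord_recr /= addrA. done. Qed.

Lemma Sb_split b F : Sb b.+1 F = F (- (b.+1)%:Z) + Sb b F + F (b.+1)%:Z.
Proof.
rewrite /Sb (sum_ord2 (b.*2.+1) (fun i => F (i%:Z - (b.+1)%:Z))).
congr (F _ + _ + F _).
- by rewrite sub0r.
- apply: eq_bigr => i _; congr F; lia.
- rewrite -addnn; lia.
Qed.

Lemma Sb_delta b c F : Sb b (fun d => if d == c then F d else 0) =
  if (absz c <= b)%N then F c else 0.
Proof.
elim: b => [|b IH].
  rewrite Sb0; case: (eqVneq 0 c) => [<-|h]; first by []. rewrite ifF //; apply/negbTE; lia.
rewrite Sb_split IH.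
repeat (case: ifP => ?); rewrite ?addr0 ?add0r; try (exfalso; lia).
all: repeat match goal with H : (_ == _) = true |- _ => move/eqP: H => H; subst end; try done.
all: try (exfalso; lia).
all: match goal with H : is_true (?x == ?y) |- _ => by move/eqP: H => -> end.
Qed.

Lemma Sb_ext b B F : (b <= B)%N -> (forall d, (b < absz d)%N -> F d = 0) ->
  Sb b F = Sb B F.
Proof.
move=> /subnK <-; elim: (B - b)%N => [|k IH] HF //.
rewrite addSn Sb_split -IH // !HF ?add0r ?addr0 //; lia.
Qed.

End Sums.

Section Basic.
Variables (R : pzRingType) (s : R -> R) (p : R) (phi : R -> R).
Hypothesis Hs : is_involution s.
Hypothesis Hp : is_projection s p.
Hypothesis Hphi : is_corner_star_iso s p phi.

Lemma sD x y : s (x + y) = s x + s y. Proof. by case: Hs. Qed.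
Lemma sM x y : s (x * y) = s y * s x. Proof. by case: Hs. Qed.
Lemma sK x : s (s x) = x. Proof. by case: Hs. Qed.
Lemma s0 : s 0 = 0.
Proof. by apply: (@addrI _ (s 0)); rewrite -sD !addr0. Qed.
Lemma s1 : s 1 = 1.
Proof. by have := sM (s 1) 1; rewrite mulr1 sK mulr1. Qed.

Lemma phiD x y : phi (x + y) = phi x + phi y. Proof. by case: Hphi. Qed.
Lemma phiM x y : phi (x * y) = phi x * phi y. Proof. by case: Hphi => _ []. Qed.
Lemma phis x : phi (s x) = s (phi x). Proof. by case: Hphi => _ [_ [_ []]]. Qed.
Lemma phi_inj : injective phi. Proof. by case: Hphi => _ [_ [_ [_ []]]]. Qed.
Lemma phi_corner x : p * phi x * p = phi x. Proof. by case: Hphi => _ [_ [_ [_ [_ [H _]]]]]; apply: H. Qed.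
Lemma phi_onto y : p * y * p = y -> exists x, phi x = y.
Proof. by case: Hphi => _ [_ [_ [_ [_ [_ H]]]]]; apply: H. Qed.
Lemma phi0 : phi 0 = 0.
Proof. by apply: (@addrI _ (phi 0)); rewrite -phiD !addr0. Qed.

Lemma phinD n x y : phin phi n (x + y) = phin phi n x + phin phi n y.
Proof. by elim: n => //= n IH; rewrite /phin /= -phiD -IH. Qed.
Lemma phinM n x y : phin phi n (x * y) = phin phi n x * phin phi n y.
Proof. by elim: n => //= n IH; rewrite /phin /= -phiM -IH. Qed.
Lemma phins n x : phin phi n (s x) = s (phin phi n x).
Proof. by elim: n => //= n IH; rewrite /phin /= -phis -IH. Qed.
Lemma phin0 n : phin phi n 0 = 0.
Proof. by elim: n => //= n IH; rewrite /phin /= -/(phin phi n 0) IH phi0. Qed.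
Lemma phin_inj n : injective (phin phi n).
Proof. elim: n => [|n IH] x y //= H; apply: IH; exact: phi_inj. Qed.
Lemma phinD_n m n x : phin phi (m + n) x = phin phi m (phin phi n x).
Proof. by rewrite /phin iterD. Qed.
Lemma phin_sum n (I : Type) (r : seq I) (P : pred I) (F : I -> R) :
  phin phi n (\sum_(i <- r | P i) F i) = \sum_(i <- r | P i) phin phi n (F i).
Proof. by apply: (big_morph _ (phinD n) (phin0 n)). Qed.

Lemma pnn n : pn phi n * pn phi n = pn phi n.
Proof. by rewrite /pn -phinM mulr1. Qed.
Lemma spn n : s (pn phi n) = pn phi n.
Proof. by rewrite /pn -phins s1. Qed.

Lemma phiinvK x : phiinv phi (phi x) = x.
Proof.
rewrite /phiinv; apply: phi_inj.
exact: (epsilon_spec (inhabits 0) (fun z => phi z = phi x) (ex_intro _ x erefl)).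
Qed.
Lemma phiinvnK n x : phiinvn phi n (phin phi n x) = x.
Proof.
elim: n x => // n IH x.
rewrite /phiinvn /phin (iterSr n (phiinv phi)) iterS phiinvK.
exact: IH.
Qed.
Lemma phiinvn0 n : phiinvn phi n 0 = 0.
Proof. by rewrite -{1}(phin0 n) phiinvnK. Qed.

Lemma pp : p * p = p. Proof. by case: Hp. Qed.

Lemma corner_img n y : pn phi n * y * pn phi n = y -> exists z, phin phi n z = y.
Proof.
elim: n y => [|n IH] y.
  by move=> _; exists y.
rewrite /pn /phin iterS -/(phin phi n 1) -/(pn phi n) => Hy.
have pq : p * phi (pn phi n) = phi (pn phi n).
  by rewrite -phi_corner !mulrA pp.
have qp : phi (pn phi n) * p = phi (pn phi n).
  by rewrite -phi_corner -!mulrA pp.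
have : p * y * p = y by rewrite -Hy -pq -qp !mulrA pp -!mulrA pp.
move=> /phi_onto [w Hw].
have Hw' : pn phi n * w * pn phi n = w.
  by apply: phi_inj; rewrite !phiM Hw.
have [z Hz] := IH w Hw'.
by exists z; rewrite /phin iterS -/(phin phi n z) Hz.
Qed.

Lemma phinK_corner n y : pn phi n * y * pn phi n = y ->
  phin phi n (phiinvn phi n y) = y.
Proof. by move=> /corner_img [z <-]; rewrite phiinvnK. Qed.


Definition T (x : cslp R) (d : int) : R :=
  hmul phi d (- d) (ccf x d) (s (ccf x d)).

Lemma hmul0a i j b : hmul phi i j 0 b = 0.
Proof.
rewrite /hmul /=; repeat case: ifP => _;
  by rewrite ?mul0r ?phin0 ?mul0r ?mulr0 ?mul0r ?phiinvn0.
Qed.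

Lemma ccf_cmul_star x : cwf phi x ->
  ccf (cmul phi x (cstar s x)) 0 = Sb (cbnd x) (T x).
Proof.
move=> [Hb _ _].
change (Sb (cbnd x) (fun di => Sb (cbnd x) (fun dj =>
  if di + dj == 0 then hmul phi di dj (ccf x di) (s (ccf x (- dj))) else 0))
  = Sb (cbnd x) (T x)).
apply: eq_bigr => i _.
set di := (_ - _).
transitivity (Sb (cbnd x) (fun dj => if dj == - di then
   (fun dj => hmul phi di dj (ccf x di) (s (ccf x (- dj)))) dj else 0)).
  apply: eq_bigr => j _.
  by rewrite addrC addr_eq0.
rewrite Sb_delta opprK abszN /T; case: ifP => // /negbT; rewrite -ltnNge => h.
by rewrite Hb // hmul0a.
Qed.

Lemma corner_sq n a : pn phi n * a = a ->
  pn phi n * (a * s a) * pn phi n = a * s a.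
Proof. by move=> H; rewrite mulrA H -mulrA -(spn n) -sM H. Qed.

Lemma T_pos x (n : nat) : T x n = ccf x n * s (ccf x n).
Proof.
rewrite /T /hmul /= abszN absz_nat subnn.
by case: n => [|n] //=; case: ifP.
Qed.

Lemma T_neg x (n : nat) : T x (Negz n) =
  phiinvn phi n.+1 (pn phi n.+1 * (ccf x (Negz n) * s (ccf x (Negz n))) * pn phi n.+1).
Proof. by rewrite /T /hmul /= minnn. Qed.

Lemma negz_corner x n : cwf phi x -> pn phi n.+1 * ccf x (Negz n) = ccf x (Negz n).
Proof. by move=> [_ H _]; rewrite NegzE H. Qed.



Lemma T_zero x d : star_proper s -> cwf phi x -> T x d = 0 -> ccf x d = 0.
Proof.
move=> Hpr Hx; case: d => n.
  by rewrite T_pos => /Hpr.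
rewrite T_neg => H; apply: Hpr.
have E := phinK_corner (corner_sq (negz_corner n Hx)).
rewrite (corner_sq (negz_corner n Hx)) in H.
by rewrite H phin0 in E.
Qed.

Definition zf (x : cslp R) (B : nat) (d : int) : R :=
  if 0 <= d then phin phi B (ccf x d) else phin phi (B - absz d) (ccf x d).

Lemma phinT x B d : cwf phi x -> (cbnd x <= B)%N ->
  phin phi B (T x d) = zf x B d * s (zf x B d).
Proof.
move=> Hx hB; rewrite /zf; case: d => n.
  by rewrite T_pos /= phinM phins.
rewrite T_neg (corner_sq (negz_corner n Hx)) [absz _]/= [0 <= _]/=.
case: (leqP n.+1 B) => h.
  rewrite -{1}(subnK h) phinD_n phinK_corner ?corner_sq ?negz_corner //.
  by rewrite phinM phins.
have h0 : ccf x (Negz n) = 0.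
  by case: Hx => Hb _ _; apply: Hb => /=; apply: leq_trans hB h.
rewrite h0 phin0 !mul0r phiinvn0 phin0.
by have -> : (0 <= Negz n) = false by []; rewrite phin0 s0 mul0r.
Qed.

Lemma zf0 x B d : zf x B d = 0 -> ccf x d = 0.
Proof.
rewrite /zf; case: ifP => _ H.
  by apply: (@phin_inj B); rewrite H phin0.
by apply: (@phin_inj (B - absz d)); rewrite H phin0.
Qed.

End Basic.

Lemma ccf_bigcadd (R : pzRingType) (n : nat) (F : 'I_n -> cslp R) k :
  ccf (\big[@cadd R/czero R]_(i < n) F i) k = \sum_(i < n) ccf (F i) k.
Proof.
by apply: (big_morph (fun y => ccf y k)).
Qed.

Lemma posdef_fin (R : pzRingType) (s : R -> R) (I : finType) (x : I -> R) :
  star_positive_definite s -> \sum_(i : I) x i * s (x i) = 0 -> forall i, x i = 0.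
Proof.
move=> Hpd; rewrite (big_enum_val (fun i => x i * s (x i))) => /Hpd H i.
by rewrite -(enum_rankK i) H.
Qed.

Definition single (R : pzRingType) (y : R) : cslp R :=
  CSLP 0 (fun k => if k == 0 then y else 0).

Lemma single_wf (R : pzRingType) (phi : R -> R) (y : R) : cwf phi (single y).
Proof.
split => [k|n|n] /=.
- by case: eqP => // ->.
- by case: n => [|n] /=; rewrite ?mul1r // mulr0.
- by case: n => [|n] /=; rewrite ?mulr1 // mul0r.
Qed.

Lemma single_mul (R : pzRingType) (s : R -> R) (phi : R -> R) (y : R) k :
  s 0 = 0 ->
  ccf (cmul phi (single y) (cstar s (single y))) k = if k == 0 then y * s y else 0.
Proof.
move=> s0; rewrite /= !big_ord1 /=.
rewrite !subrr eq_sym; case: ifP => // _.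
Qed.

Theorem mainTheorem10 (R : pzRingType) (s : R -> R) (p : R) (phi : R -> R) :
  is_involution s -> is_projection s p -> is_corner_star_iso s p phi ->
  (star_proper s <-> A_graded_proper s phi) /\
  (star_positive_definite s <-> A_positive_definite s phi).
Proof.
move=> Hs Hp Hphi.
have s0 := s0 Hs.
split; split.
- move=> Hpr x Hx [d Hd] Hc k.
  have H0 := Hc 0; rewrite (ccf_cmul_star Hphi Hx) [ccf (czero _) _]/= in H0.
  have HT e : e != d -> T s phi x e = 0.
    by move=> /Hd; rewrite /T => ->; rewrite (hmul0a Hphi).
  rewrite (_ : Sb _ (T s phi x) = Sb (cbnd x) (fun e => if e == d then T s phi x e else 0)) in H0; last first.
    by apply: eq_bigr => i _; case: eqP => // /eqP /HT.
  rewrite Sb_delta in H0.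
  rewrite [ccf (czero _) _]/=.
  case: (eqVneq k d) => [->|/Hd] //.
  move: H0; case: ifP => hb H0.
    exact: (T_zero Hs Hp Hphi Hpr Hx H0).
  by case: Hx => Hb _ _; apply: Hb; rewrite ltnNge hb.
- move=> Hg y Hy.
  have := Hg (single y) (single_wf phi y) _ _ 0.
  apply => //.
    by exists 0 => k /negbTE /= ->.
  by move=> k; rewrite single_mul //= ; case: ifP.
- move=> Hpd n X HX Hc i k.
  pose B := (\max_(j < n) cbnd (X j))%N.
  have hb j : (cbnd (X j) <= B)%N by apply: (leq_bigmax j).
  have H0 := Hc 0; rewrite ccf_bigcadd [ccf (czero _) _]/= in H0.
  have H1 : \sum_(j < n) \sum_(e < B.*2.+1)
      zf phi (X j) B ((e : nat)%:Z - B%:Z) * s (zf phi (X j) B ((e : nat)%:Z - B%:Z)) = 0.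
    have := congr1 (phin phi B) H0; rewrite (phin0 Hphi) (phin_sum Hphi) => E.
    rewrite -[RHS]E; apply: eq_bigr => j _.
    rewrite (ccf_cmul_star Hphi (HX j)) (Sb_ext (hb j)).
      rewrite /Sb (phin_sum Hphi); apply: eq_bigr => e _.
      by rewrite (phinT Hs Hp Hphi _ (HX j) (hb j)).
    move=> d hd; rewrite /T; case: (HX j) => Hb _ _.
    by rewrite Hb // (hmul0a Hphi).
  rewrite pair_bigA /= in H1.
  have Hz := posdef_fin (x := fun pr : 'I_n * 'I_(B.*2.+1) =>
     zf phi (X pr.1) B ((pr.2 : nat)%:Z - B%:Z)) Hpd H1.
  rewrite [ccf (czero _) _]/=.
  case: (leqP (absz k) B) => hk; last first.
    by case: (HX i) => Hb _ _; apply: Hb; apply: leq_ltn_trans (hb i) hk.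
  apply: (zf0 Hphi (B := B)).
  have := Hz (i, inord (absz (k + B%:Z))).
  rewrite /= inordK; last lia.
  have -> : ((absz (k + B%:Z))%:Z - B%:Z) = k by lia.
  done.
- move=> Ha n y Hy i.
  have := Ha n (fun i => single (y i)) (fun i => single_wf phi (y i)) _ i 0.
  apply.
  move=> k; rewrite ccf_bigcadd [ccf (czero _) _]/=.
  under eq_bigr do rewrite single_mul //.
  case: eqP => _; last by rewrite big1.
exact: Hy.
Qed.
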